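(* Let $(W,S)$ be a Coxeter system with $S$ finite, $\Phi_W$ its root system viewed as a rack with $\alpha\ast\beta=t_\beta(\alpha)$, and $p:\Phi_W\to Q_W$ the map $\alpha\mapsto t_\alpha$. Then $p$ induces an isomorphism $\operatorname{Ad}(\Phi_W)\cong\operatorname{Ad}(Q_W)$, given by $e_\alpha\mapsto e_{p(\alpha)}$.
   Context: A Coxeter system $(W,S)$: $S$ finite, $m:S\times S\to\mathbb{N}\cup\{\infty\}$ with $m(s,s)=1$, $2\le m(s,t)=m(t,s)\le\infty$ for $s\ne t$, $W=\langle s\in S\mid (st)^{m(s,t)}=1\ (m(s,t)<\infty)\rangle$. Let $V$ be the real vector space with basis $\{\alpha_s\mid s\in S\}$ and $B$ the symmetric bilinear form with $B(\alpha_s,\alpha_t)=-\cos(\pi/m(s,t))$ (interpreted as $-1$ when $m(s,t)=\infty$). The geometric representation $\sigma:W\to GL(V)$ sends $s$ to $\sigma_s(\lambda)=\lambda-2B(\alpha_s,\lambda)\alpha_s$; it is faithful and preserves $B$, and elements of $\sigma(W)$ are identified with elements of $W$. The root system is $\Phi_W=\{w(\alpha_s)\mid s\in S,w\in W\}$, and for $\alpha\in\Phi_W$, $t_\alpha(\lambda)=\lambda-2B(\alpha,\lambda)\alpha$, which is an element of $W$ lying in $Q_W$. A rack is a set $X$ with a binary operation $\ast$ such that $(x\ast y)\ast z=(x\ast z)\ast(y\ast z)$ and each map $x\mapsto x\ast y$ is bijective; a quandle is a rack with $x\ast x=x$. The Coxeter quandle is $Q_W=\bigcup_{w\in W}w^{-1}Sw$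 with $x\ast y=yxy$. For a rack or quandle $X$, $\operatorname{Ad}(X)=\langle e_x\ (x\in X)\mid e_y^{-1}e_xe_y=e_{x\ast y}\ (x,y\in X)\rangle$. *)

(* Defs.v *)
From Stdlib Require Import Reals.
From mathcomp Require Import all_boot all_algebra.
From mathcomp Require Import Rstruct.

Set Implicit Arguments.
Unset Strict Implicit.
Unset Printing Implicit Defensive.

Import GRing.Theory.
Local Open Scope ring_scope.

(* A Coxeter matrix on the finite set S; [None] encodes m(s,t) = infinity. *)
Definition coxeter_matrix (S : finType) (m : S -> S -> option nat) : Prop :=
  [/\ forall s, m s s = Some 1%N,
      forall s t, m s t = m t s
    & forall s t, s <> t ->
        match m s t with Some k => (2 <= k)%N | None => true end].

(* V = real vector space with basis (alpha_s)_{s in S}, as coordinate functions. *)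
Definition vec (S : finType) := S -> R.

Definition Bcoef (S : finType) (m : S -> S -> option nat) (s t : S) : R :=
  match m s t with
  | Some k => - Rtrigo_def.cos (PI / INR k)
  | None => -1
  end.

Definition Bform (S : finType) (m : S -> S -> option nat) (u v : vec S) : R :=
  \sum_(s : S) \sum_(t : S) (u s * v t * Bcoef m s t).

Definition simple_root (S : finType) (s : S) : vec S :=
  fun t => if t == s then 1 else 0.

Definition refl (S : finType) (m : S -> S -> option nat) (a : vec S) : vec S -> vec S :=
  fun l t => l t - 2 * Bform m a l * a t.

Definition sigma (S : finType) (m : S -> S -> option nat) (s : S) : vec S -> vec S :=
  refl m (simple_root s).

(* W identified with sigma(W): the maps obtained as finite products of the sigma_s
   (this is the subgroup of GL(V) generated by the sigma_s, as sigma_s^2 = 1). *)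
Inductive in_W (S : finType) (m : S -> S -> option nat) : (vec S -> vec S) -> Prop :=
  | W_id : in_W m id
  | W_gen (s : S) (w : vec S -> vec S) : in_W m w -> in_W m (sigma m s \o w).

Definition in_QW (S : finType) (m : S -> S -> option nat) (f : vec S -> vec S) : Prop :=
  exists (w winv : vec S -> vec S) (s : S),
    [/\ in_W m w, in_W m winv, (forall l, winv (w l) = l), (forall l, w (winv l) = l)
      & f = winv \o sigma m s \o w].

Definition is_root (S : finType) (m : S -> S -> option nat) (a : vec S) : Prop :=
  exists (w : vec S -> vec S) (s : S), in_W m w /\ a = w (simple_root s).

Definition root_op (S : finType) (m : S -> S -> option nat) (a b : vec S) : vec S :=
  refl m b a.

Definition quandle_op (S : finType) (x y : vec S -> vec S) : vec S -> vec S :=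
  y \o x \o y.

(* A rack X is given as a subset P of a carrier T together with its operation op.
   Elements of Ad(X) are represented by words in the letters e_x (x, true) and
   e_x^{-1} (x, false), x in X, read as products from left to right. *)
Definition ad_word (T : Type) (P : T -> Prop) (u : seq (T * bool)) : Prop :=
  List.Forall (fun z => P z.1) u.

(* Equality in Ad(X): the congruence on words generated by free cancellation
   e_x e_x^{-1} = 1 = e_x^{-1} e_x and the relations e_y^{-1} e_x e_y = e_{x*y}. *)
Inductive adeq (T : Type) (P : T -> Prop) (op : T -> T -> T) :
    seq (T * bool) -> seq (T * bool) -> Prop :=
  | ad_refl u : ad_word P u -> adeq P op u u
  | ad_sym u v : adeq P op u v -> adeq P op v u
  | ad_trans u v w : adeq P op u v -> adeq P op v w -> adeq P op u w
  | ad_cong a u v b : ad_word P a -> ad_word P b -> adeq P op u v ->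
      adeq P op (a ++ u ++ b) (a ++ v ++ b)
  | ad_inv x b : P x -> adeq P op [:: (x, b); (x, ~~ b)] [::]
  | ad_rel x y : P x -> P y ->
      adeq P op [:: (y, false); (x, true); (y, true)] [:: (op x y, true)].

Definition map_word (T U : Type) (f : T -> U) (u : seq (T * bool)) : seq (U * bool) :=
  map (fun z => (f z.1, z.2)) u.

(* f : X -> Y induces an isomorphism Ad(X) -> Ad(Y), e_x |-> e_{f x}:
   the induced homomorphism on words is well defined, injective and surjective. *)
Definition induces_Ad_iso (T U : Type) (P : T -> Prop) (opT : T -> T -> T)
    (Q : U -> Prop) (opU : U -> U -> U) (f : T -> U) : Prop :=
  [/\ forall u v, adeq P opT u v -> adeq Q opU (map_word f u) (map_word f v),
      forall u v, ad_word P u -> ad_word P v ->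
        adeq Q opU (map_word f u) (map_word f v) -> adeq P opT u v
    & forall w, ad_word Q w ->
        exists u, ad_word P u /\ adeq Q opU (map_word f u) w].

(* Main.v *)
Require Import Defs.
From Stdlib Require Import Reals FunctionalExtensionality ClassicalEpsilon.
From mathcomp Require Import all_boot all_algebra.
From mathcomp Require Import Rstruct ring lra.
Import GRing.Theory.
Local Open Scope ring_scope.

Set Implicit Arguments.
Section Ad.
Variables (T : Type) (P : T -> Prop) (op : T -> T -> T).
Hypothesis Hop : forall x y, P x -> P y -> P (op x y).

Lemma word_cat (u v : seq (T * bool)) : ad_word P u -> ad_word P v -> ad_word P (u ++ v).
Proof. elim: u => [|z u IH] /= H Hv //; inversion H; subst; constructor =>//; exact: IH. Qed.

Lemma word_catl (u v : seq (T * bool)) : ad_word P (u ++ v) -> ad_word P u /\ ad_word P v.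
Proof.
elim: u => [|z u IH] //= H; first by split => //; constructor.
inversion H; have [] := IH H3; split => //; constructor => //.
Qed.

Lemma adeq_word u v : adeq P op u v -> ad_word P u /\ ad_word P v.
Proof.
elim=> {u v}.
- by move=> u Hu.
- by move=> u v _ [? ?]; split.
- by move=> u v w _ [? _] _ [_ ?]; split.
- move=> a u v b Ha Hb _ [Hu Hv]; split; apply: word_cat => //; exact: word_cat.
- by move=> x b Hx; split; repeat constructor.
- by move=> x y Hx Hy; split; repeat constructor => //; apply: Hop.
Qed.

Lemma adeq_cat u u' v v' : adeq P op u u' -> adeq P op v v' -> adeq P op (u ++ v) (u' ++ v').
Proof.
move=> H1 H2.
have [Hu Hu'] := adeq_word H1; have [Hv Hv'] := adeq_word H2.
apply: (ad_trans (v := u' ++ v)).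
  have := ad_cong (a := [::]) (b := v) (List.Forall_nil _) Hv H1; by [].
have := ad_cong (a := u') (b := [::]) Hu' (List.Forall_nil _) H2; by rewrite !cats0.
Qed.

Lemma adeq_letter x y : P x -> P y -> adeq P op [:: (x, true)] [:: (y, true)] ->
  forall b, adeq P op [:: (x, b)] [:: (y, b)].
Proof.
move=> Hx Hy H [] //.
have Wx : ad_word P [:: (x, false)] by repeat constructor.
have Wy : ad_word P [:: (y, false)] by repeat constructor.
apply: (ad_trans (v := [:: (x, false); (y, true); (y, false)])).
  apply: ad_sym.
  have := ad_cong (a := [:: (x, false)]) (b := [::]) Wx (List.Forall_nil _) (ad_inv op true Hy); by [].
apply: (ad_trans (v := [:: (x, false); (x, true); (y, false)])).
  have := ad_cong (a := [:: (x, false)]) (b := [:: (y, false)]) Wx Wy (ad_sym H); by [].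
have := ad_cong (a := [::]) (b := [:: (y, false)]) (List.Forall_nil _) Wy (ad_inv op false Hx); by [].
Qed.

End Ad.

Section AdMap.
Variables (T U : Type) (P : T -> Prop) (opT : T -> T -> T) (Q : U -> Prop) (opU : U -> U -> U)
  (f : T -> U).
Hypothesis HQ : forall x y, Q x -> Q y -> Q (opU x y).
Hypothesis Hf : forall x, P x -> Q (f x).
Hypothesis Hrel : forall x y, P x -> P y ->
  adeq Q opU [:: (f y, false); (f x, true); (f y, true)] [:: (f (opT x y), true)].

Lemma map_word_ok u : ad_word P u -> ad_word Q (map_word f u).
Proof. elim: u => [|z u IH] /= H; first by constructor. inversion H; subst; constructor; [exact: Hf | exact: IH]. Qed.

Lemma adeq_map u v : adeq P opT u v -> adeq Q opU (map_word f u) (map_word f v).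
Proof.
elim=> {u v}.
- by move=> u Hu; apply: ad_refl; apply: map_word_ok.
- by move=> u v _ H; apply: ad_sym.
- by move=> u v w _ H1 _ H2; apply: ad_trans H2.
- move=> a u v b Ha Hb _ H; rewrite /map_word !map_cat.
  by apply: ad_cong => //; apply: map_word_ok.
- by move=> x b Hx; apply: (ad_inv opU b (Hf Hx)).
- by move=> x y Hx Hy; apply: Hrel.
Qed.

End AdMap.

Unset Implicit Arguments.
Section LA.
Variables (S : finType) (m : S -> S -> option nat).
Hypothesis Hm : coxeter_matrix m.
Local Notation B := (Bform m).

Lemma Bsym u v : B u v = B v u.
Proof.
rewrite /Bform exchange_big; apply: eq_bigr => s _; apply: eq_bigr => t _.
case: Hm => _ Hs _; rewrite /Bcoef Hs; ring.
Qed.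

Lemma Blin2 u a v b x : B u (fun t => a * v t + b * x t) = a * B u v + b * B u x.
Proof.
rewrite /Bform !mulr_sumr -big_split; apply: eq_bigr => s _.
rewrite !mulr_sumr -big_split; apply: eq_bigr => t _ /=; ring.
Qed.

Lemma Blin1 u a v b x : B (fun t => a * v t + b * x t) u = a * B v u + b * B x u.
Proof. by rewrite Bsym Blin2 (Bsym u) (Bsym u). Qed.

Lemma Bsimple s : B (simple_root s) (simple_root s) = 1.
Proof.
rewrite /Bform (bigD1 s) //= addrC big1 ?add0r => [|s' ns]; last first.
  by apply: big1 => t _; rewrite /simple_root (negbTE ns); ring.
rewrite (bigD1 s) //= addrC big1 ?add0r => [|t nt]; last first.
  by rewrite /simple_root (negbTE nt); ring.
rewrite /simple_root eqxx /Bcoef.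
case: Hm => -> _ _. rewrite /= Rdiv_1_r cos_PI. change (1 * 1 * - (Ropp R1) = 1).
by rewrite RoppE opprK !mulr1.
Qed.

Definition lin (f : vec S -> vec S) :=
  forall a u b v, f (fun t => a * u t + b * v t) = (fun t => a * f u t + b * f v t).
Definition iso (f : vec S -> vec S) := forall u v, B (f u) (f v) = B u v.

Lemma refl_lc a x : refl m a x = (fun t => 1 * x t + (- (2 * B a x)) * a t).
Proof. apply: functional_extensionality => t; rewrite /refl; ring. Qed.

Lemma refl_lin a : lin (refl m a).
Proof.
move=> c u d v; rewrite /refl; apply: functional_extensionality => t.
rewrite Blin2; ring.
Qed.

Lemma refl_iso a : B a a = 1 -> iso (refl m a).
Proof.
move=> Ha u v; rewrite !refl_lc Blin1 !Blin2 Ha (Bsym u a); ring.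
Qed.

Lemma refl_inv a : B a a = 1 -> forall l, refl m a (refl m a l) = l.
Proof.
move=> Ha l; rewrite (refl_lc a (refl m a l)) refl_lc; apply: functional_extensionality => t.
rewrite Blin2 Ha; ring.
Qed.

Lemma reflE a v t : refl m a v t = v t - 2 * B a v * a t.
Proof. by []. Qed.

Lemma Brefl2 u a v : B u (refl m a v) = B u v - 2 * B a v * B u a.
Proof. rewrite refl_lc Blin2; ring. Qed.
Lemma Brefl1 u a v : B (refl m a v) u = B v u - 2 * B a v * B a u.
Proof. rewrite refl_lc Blin1; ring. Qed.

Lemma refl_conj a x : B a a = 1 ->
  (fun l => refl m a (refl m x (refl m a l))) = refl m (refl m a x).
Proof.
move=> Ha; apply: functional_extensionality => l.
apply: functional_extensionality => t.
rewrite !reflE !Brefl2 !Brefl1 Ha (Bsym x a); ring.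
Qed.

Lemma W_lin_iso w : in_W m w -> lin w /\ iso w.
Proof.
elim=> [|s f _ [Hl Hi]]; first by split.
split.
  move=> a u b v /=; rewrite Hl /Defs.sigma; apply: functional_extensionality => t.
  by rewrite !reflE Blin2; ring.
move=> u v /=; rewrite /Defs.sigma refl_iso ?Bsimple //.
Qed.

Lemma W_conj w g a : in_W m w -> (forall l, w (g l) = l) ->
  refl m (w a) = w \o refl m a \o g.
Proof.
move=> /W_lin_iso [Hl Hi] Hwg; apply: functional_extensionality => l /=.
rewrite (refl_lc a (g l)) Hl Hwg.
have -> : B a (g l) = B (w a) l by rewrite -Hi Hwg.
by rewrite refl_lc.
Qed.

Lemma refl_eq a b : B a a = 1 -> B b b = 1 -> refl m a = refl m b ->
  b = a \/ b = (fun t => - a t).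
Proof.
move=> Ha Hb E.
have Hr : forall t, a t = B b a * b t.
  move=> t; have := congr1 (fun f => f a t) E; rewrite /refl Ha => H.
  have : a t - 2 * 1 * a t = a t - 2 * B b a * b t by rewrite H.
  move=> H2; lra.
have Ha' : a = (fun t => B b a * b t + 0 * b t).
  by apply: functional_extensionality => t; rewrite Hr; ring.
have : B a a = (B b a) ^+ 2.
  by rewrite {1}Ha' Blin1 Ha' !Blin2 Hb; ring.
rewrite Ha => /esym /eqP; rewrite sqrf_eq1 => /orP [] /eqP Hc.
  left; apply: functional_extensionality => t; by rewrite Hr Hc mul1r.
right; apply: functional_extensionality => t; rewrite Hr Hc; ring.
Qed.

Lemma W_comp f g : in_W m f -> in_W m g -> in_W m (f \o g).
Proof.
elim=> [|s w _ IH] Hg; first exact: Hg.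
exact: (W_gen s (IH Hg)).
Qed.

Lemma sigma_inv s l : Defs.sigma m s (Defs.sigma m s l) = l.
Proof. exact: (@refl_inv _ (Bsimple s) l). Qed.

Lemma W_inv f : in_W m f ->
  exists g, [/\ in_W m g, forall l, g (f l) = l & forall l, f (g l) = l].
Proof.
elim=> [|s w _ [g [Hg H1 H2]]]; first by exists id; split => //; exact: W_id.
exists (g \o Defs.sigma m s); split.
- exact: (@W_comp _ _ Hg (W_gen s (W_id m))).
- by move=> l /=; rewrite sigma_inv H1.
- by move=> l /=; rewrite H2 sigma_inv.
Qed.

Lemma root_B a : is_root m a -> B a a = 1.
Proof.
case=> w [s [Hw ->]]; have [_ Hi] := @W_lin_iso _ Hw.
by rewrite Hi Bsimple.
Qed.

Lemma root_reflW b : is_root m b -> in_W m (refl m b).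
Proof.
case=> w [s [Hw ->]]; have [g [Hg H1 H2]] := @W_inv _ Hw.
rewrite (@W_conj _ _ _ Hw H2).
exact: (@W_comp _ _ (@W_comp _ _ Hw (W_gen s (W_id m))) Hg).
Qed.

Lemma root_op_closed a b : is_root m a -> is_root m b -> is_root m (root_op m a b).
Proof.
case=> w [s [Hw ->]] Hb; exists (refl m b \o w), s; split => //.
exact: (@W_comp _ _ (@root_reflW _ Hb) Hw).
Qed.

Lemma root_QW a : is_root m a -> in_QW m (refl m a).
Proof.
case=> w [s [Hw ->]]; have [g [Hg H1 H2]] := @W_inv _ Hw.
exists g, w, s; split => //.
exact: (@W_conj _ _ _ Hw H2).
Qed.

Lemma QW_root q : in_QW m q -> exists a, is_root m a /\ refl m a = q.
Proof.
case=> w [winv [s [Hw Hwinv H1 H2 ->]]].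
exists (winv (simple_root s)); split; first by exists winv, s.
exact: (@W_conj _ _ _ Hwinv H1).
Qed.

Lemma root_neg a : is_root m a -> root_op m a a = (fun t => - a t).
Proof.
move=> /root_B Ha; apply: functional_extensionality => t.
rewrite /root_op reflE Ha; ring.
Qed.

Lemma QW_closed x y : in_QW m x -> in_QW m y -> in_QW m (quandle_op x y).
Proof.
move=> /QW_root [a [Ha <-]] /QW_root [b [Hb <-]].
rewrite /quandle_op.
have -> : refl m b \o refl m a \o refl m b = refl m (refl m b a)
  by rewrite -(refl_conj b a (@root_B _ Hb)).
exact: (@root_QW _ (@root_op_closed _ _ Ha Hb)).
Qed.

Definition gsel (q : vec S -> vec S) : vec S :=
  epsilon (inhabits (fun _ => 0)) (fun a => is_root m a /\ refl m a = q).

Lemma gsel_spec q : in_QW m q -> is_root m (gsel q) /\ refl m (gsel q) = q.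
Proof. by move=> /QW_root H; apply: (epsilon_spec (inhabits (fun _ : S => 0)) (fun a => is_root m a /\ refl m a = q)). Qed.

Lemma neg_letter a b : is_root m a ->
  adeq (is_root m) (root_op m) [:: (a, b)] [:: (fun t => - a t, b)].
Proof.
move=> Ha.
have Hn : is_root m (fun t => - a t).
  by rewrite -root_neg //; apply: root_op_closed.
have H1 : adeq (is_root m) (root_op m) [:: (a, true)] [:: (fun t => - a t, true)].
  rewrite -root_neg //.
  apply: ad_sym; apply: (ad_trans (ad_sym (ad_rel _ Ha Ha))).
  have W1 : ad_word (is_root m) [:: (a, true)] by repeat constructor.
  have := ad_cong (a := [::]) (b := [:: (a, true)]) (List.Forall_nil _) W1 (ad_inv (root_op m) false Ha).
  by [].
exact: (adeq_letter Ha Hn H1 b).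
Qed.

Lemma gsel_letter a b : is_root m a ->
  adeq (is_root m) (root_op m) [:: (gsel (refl m a), b)] [:: (a, b)].
Proof.
move=> Ha; have [Hr E] := @gsel_spec _ (@root_QW _ Ha).
case: (@refl_eq _ _ (@root_B _ Ha) (@root_B _ Hr) (esym E)) => ->.
  by apply: ad_refl; repeat constructor.
by apply: ad_sym; apply: neg_letter.
Qed.

Lemma gsel_word u : ad_word (is_root m) u ->
  adeq (is_root m) (root_op m) (map_word gsel (map_word (refl m) u)) u.
Proof.
elim: u => [|[a b] u IH] H; first by apply: ad_refl.
inversion H; subst.
have := adeq_cat (@root_op_closed) (@gsel_letter _ b H2) (IH H3); by [].
Qed.

Lemma quandle_refl a b : is_root m b ->
  quandle_op (refl m a) (refl m b) = refl m (root_op m a b).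
Proof. by move=> Hb; rewrite /quandle_op -(refl_conj b a (@root_B _ Hb)). Qed.

Lemma gsel_rel x y : in_QW m x -> in_QW m y ->
  adeq (is_root m) (root_op m) [:: (gsel y, false); (gsel x, true); (gsel y, true)]
    [:: (gsel (quandle_op x y), true)].
Proof.
move=> Hx Hy; have [Ha Ex] := @gsel_spec _ Hx; have [Hb Ey] := @gsel_spec _ Hy.
have -> : quandle_op x y = refl m (root_op m (gsel x) (gsel y))
  by rewrite -{1}Ex -{1}Ey quandle_refl.
apply: (ad_trans (ad_rel _ Ha Hb)); apply: ad_sym; apply: gsel_letter.
exact: root_op_closed.
Qed.

Lemma refl_gsel w : ad_word (in_QW m) w -> map_word (refl m) (map_word gsel w) = w.
Proof.
elim: w => [|[q b] w IH] H //; inversion H; subst.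
by rewrite /= (@gsel_spec _ H2).2 -{2}(IH H3).
Qed.

Lemma main :
  induces_Ad_iso (is_root m) (root_op m) (in_QW m) (@quandle_op S) (refl m).
Proof.
split.
- move=> u v; apply: (adeq_map (refl m) (@root_QW)).
  move=> x y Hx Hy; rewrite -quandle_refl //.
  exact: ad_rel (@root_QW _ Hx) (@root_QW _ Hy).
- move=> u v Hu Hv H.
  apply: (ad_trans (ad_sym (@gsel_word _ Hu))); apply: (ad_trans _ (@gsel_word _ Hv)).
  exact: (adeq_map gsel (fun x Hx => (@gsel_spec x Hx).1) (@gsel_rel) H).
- move=> w Hw; exists (map_word gsel w); split.
    exact: (map_word_ok (is_root m) gsel (fun x Hx => (@gsel_spec x Hx).1) Hw).
  by rewrite refl_gsel //; apply: ad_refl.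
Qed.

End LA.

Theorem theorem6p3 (S : finType) (m : S -> S -> option nat)
    (Hm : coxeter_matrix m) :
  induces_Ad_iso (is_root m) (root_op m) (in_QW m) (@quandle_op S) (refl m).
Proof. exact: main Hm. Qed.
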